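(* Assume $(X,T)$ has the b.i.p.-property. Then for every $a\in\mathcal W^1$ and a.e. $\omega\in\Omega_a$ there exist $\alpha_\omega,\beta_\omega\in\mathbb N$ such that (i) $\mathcal W^n_\omega(a,b)\ne\emptyset$ for all $n\ge\alpha_\omega$ and all $b\in\mathcal W^1_{\theta^n\omega}$; (ii) $\mathcal W^n_{\theta^{-n}\omega}(b,a)\ne\emptyset$ for all $n\ge\beta_\omega$ and all $b\in\mathcal W^1_{\theta^{-n}\omega}$.
   Context: Let $(\Omega,\mathcal F,P)$ be a probability space and $\theta:\Omega\to\Omega$ an invertible, bimeasurable, $P$-preserving, ergodic map. Let $\ell:\Omega\to\mathbb N\cup\{\infty\}$ be measurable with $\ell_\omega>1$, and for a.e. $\omega$ let $A_\omega=(\alpha_{ij}(\omega))_{0\le i<\ell_\omega,\,0\le j<\ell_{\theta\omega}}$ be a $\{0,1\}$-matrix depending measurably on $\omega$ such that every row contains an entry $1$. Put $X_\omega=\{x=(x_0,x_1,\dots): x_i<\ell_{\theta^i\omega},\ \alpha_{x_ix_{i+1}}(\theta^i\omega)=1\ \forall i\ge0\}$, $T_\omega:X_\omega\to X_{\theta\omega}$ the left shift, $T^n_\omega=T_{\theta^{n-1}\omega}\circ\cdots\circ T_\omega$. A word $w=(w_0,\dots,w_{n-1})$ is $\omega$-admissible if $w_i<\ell_{\theta^i\omega}$ for all $i<n$ and $\alpha_{w_iw_{i+1}}(\theta^i\omega)=1$ for $i<n-1$; $\mathcal W^n_\omega$ is the set of such words of length $n$ (so $\mathcal W^1_\omega=\{c: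 c<\ell_\omega\}$); $[w]_\omega=\{x\in X_\omega: x_i=w_i,\ i<n\}$; $\Omega_w=\{\omega: w\in\mathcal W^n_\omega\}$; $\mathcal W^n$ is the set of words $w$ of length $n$ with $P(\Omega_w)>0$. For $a,b$, $\mathcal W^n_\omega(a,b)=\{w\in\mathcal W^n_\omega: w_0=a,\ \alpha_{w_{n-1}b}(\theta^{n-1}\omega)=1\}$. $(X,T)$ is topologically mixing if for all $a,b\in\mathcal W^1$ there is an $\mathbb N$-valued random variable $N_{ab}$ with $[a]_\omega\cap(T^n_\omega)^{-1}[b]_{\theta^n\omega}\ne\emptyset$ whenever $\omega\in\Omega_a$, $n\ge N_{ab}(\omega)$, $\theta^n\omega\in\Omega_b$. Big image property: there exist a measurable $\Omega_{bi}\subset\Omega$ with $P(\Omega_{bi})>0$ and finite sets $\mathcal I^\omega_{bi}\subset\mathcal W^1_\omega$ ($\omega\in\Omega_{bi}$) such that for every $c\in\mathcal W^1_{\theta^{-1}\omega}$ there is $b\in\mathcal I^\omega_{bi}$ with $\alpha_{cb}(\theta^{-1}\omega)=1$. Big preimage property: there exist a measurable $\Omega_{bp}\subset\Omega$ with $P(\Omega_{bp})>0$ and finite sets $\mathcal I^\omega_{bp}\subset\mathcal W^1_{\theta^{-1}\omega}$ ($\omega\in\Omega_{bp}$) such that for every $c\in\mathcal W^1_\omega$ there is $b\in\mathcal I^\omega_{bp}$ with $\alpha_{bc}(\theta^{-1}\omega)=1$. (Without loss of generality the sets $\mathcal I^\omega_{bi}$, resp. $\mathcal I^\omega_{bp}$,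 are contained in a fixed finite set.) $(X,T)$ has the b.i.p.-property if it is topologically mixing and has both the big image and big preimage property. *)

(* Defs.v *)
From Stdlib Require Import Reals List Arith.
Open Scope R_scope.

(** A probability space: sigma-algebra [meas] and a countably additive
    probability [P] (only meaningful on measurable sets). *)
Record probability_space (Omega : Type) := {
  meas : (Omega -> Prop) -> Prop;
  P : (Omega -> Prop) -> R;
  meas_full : meas (fun _ => True);
  meas_compl : forall A, meas A -> meas (fun x => ~ A x);
  meas_union : forall A : nat -> Omega -> Prop,
      (forall n, meas (A n)) -> meas (fun x => exists n, A n x);
  P_nonneg : forall A, meas A -> 0 <= P A;
  P_full : P (fun _ => True) = 1;
  P_sigma_additive : forall A : nat -> Omega -> Prop,
      (forall n, meas (A n)) ->
      (forall m n x, A m x -> A n x -> m = n) ->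
      infinite_sum (fun n => P (A n)) (P (fun x => exists n, A n x))
}.
Arguments meas {Omega} p _.
Arguments P {Omega} p _.

Definition invertible_mpt_ergodic {Omega : Type} (PS : probability_space Omega)
  (theta thinv : Omega -> Omega) : Prop :=
  (forall w, thinv (theta w) = w) /\ (forall w, theta (thinv w) = w) /\
  (forall A, meas PS A -> meas PS (fun w => A (theta w))) /\
  (forall A, meas PS A -> meas PS (fun w => A (thinv w))) /\
  (forall A, meas PS A -> P PS (fun w => A (theta w)) = P PS A) /\
  (forall A, meas PS A -> (forall w, A (theta w) <-> A w) ->
     P PS A = 0 \/ P PS A = 1).


(** Lengths in N ∪ {∞}: [None] is ∞. *)
Definition lt_len (c : nat) (l : option nat) : Prop :=
  match l with None => True | Some m => (c < m)%nat end.

Definition random_shift_data {Omega : Type} (PS : probability_space Omega)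
  (theta : Omega -> Omega) (ell : Omega -> option nat)
  (alpha : Omega -> nat -> nat -> bool) : Prop :=
  (forall k, meas PS (fun w => ell w = Some k)) /\
  (forall w, lt_len 1 (ell w)) /\
  (forall i j, meas PS (fun w => alpha w i j = true)) /\
  (forall w i, lt_len i (ell w) ->
     exists j, lt_len j (ell (theta w)) /\ alpha w i j = true).

Definition in_X {Omega : Type} (theta : Omega -> Omega) (ell : Omega -> option nat)
  (alpha : Omega -> nat -> nat -> bool) (w : Omega) (x : nat -> nat) : Prop :=
  forall i, lt_len (x i) (ell (Nat.iter i theta w)) /\
            alpha (Nat.iter i theta w) (x i) (x (S i)) = true.

Definition admissible {Omega : Type} (theta : Omega -> Omega) (ell : Omega -> option nat)
  (alpha : Omega -> nat -> nat -> bool) (w : Omega) (u : list nat) : Prop :=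
  (forall i, (i < length u)%nat -> lt_len (nth i u 0%nat) (ell (Nat.iter i theta w))) /\
  (forall i, (S i < length u)%nat ->
     alpha (Nat.iter i theta w) (nth i u 0%nat) (nth (S i) u 0%nat) = true).

Definition Omega_sym {Omega : Type} (ell : Omega -> option nat) (a : nat) (w : Omega) : Prop :=
  lt_len a (ell w).

Definition in_W1 {Omega : Type} (PS : probability_space Omega)
  (ell : Omega -> option nat) (a : nat) : Prop :=
  P PS (Omega_sym ell a) > 0.

Definition Wab_nonempty {Omega : Type} (theta : Omega -> Omega) (ell : Omega -> option nat)
  (alpha : Omega -> nat -> nat -> bool) (n : nat) (w : Omega) (a b : nat) : Prop :=
  exists u : list nat, length u = n /\ admissible theta ell alpha w u /\
    nth 0 u 0%nat = a /\
    alpha (Nat.iter (n - 1) theta w) (nth (n - 1) u 0%nat) b = true.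

Definition top_mixing {Omega : Type} (PS : probability_space Omega)
  (theta : Omega -> Omega) (ell : Omega -> option nat)
  (alpha : Omega -> nat -> nat -> bool) : Prop :=
  forall a b, in_W1 PS ell a -> in_W1 PS ell b ->
  exists N : Omega -> nat,
    (forall k, meas PS (fun w => N w = k)) /\
    forall w n, Omega_sym ell a w -> (N w <= n)%nat ->
      Omega_sym ell b (Nat.iter n theta w) ->
      exists x, in_X theta ell alpha w x /\ x 0%nat = a /\ x n = b.

Definition big_image {Omega : Type} (PS : probability_space Omega)
  (thinv : Omega -> Omega) (ell : Omega -> option nat)
  (alpha : Omega -> nat -> nat -> bool) : Prop :=
  exists (Obi : Omega -> Prop) (I : Omega -> list nat),
    meas PS Obi /\ P PS Obi > 0 /\
    forall w, Obi w ->
      (forall b, In b (I w) -> lt_len b (ell w)) /\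
      (forall c, lt_len c (ell (thinv w)) ->
         exists b, In b (I w) /\ alpha (thinv w) c b = true).

Definition big_preimage {Omega : Type} (PS : probability_space Omega)
  (thinv : Omega -> Omega) (ell : Omega -> option nat)
  (alpha : Omega -> nat -> nat -> bool) : Prop :=
  exists (Obp : Omega -> Prop) (I : Omega -> list nat),
    meas PS Obp /\ P PS Obp > 0 /\
    forall w, Obp w ->
      (forall b, In b (I w) -> lt_len b (ell (thinv w))) /\
      (forall c, lt_len c (ell w) ->
         exists b, In b (I w) /\ alpha (thinv w) b c = true).

Definition bip_property {Omega : Type} (PS : probability_space Omega)
  (theta thinv : Omega -> Omega) (ell : Omega -> option nat)
  (alpha : Omega -> nat -> nat -> bool) : Prop :=
  top_mixing PS theta ell alpha /\ big_image PS thinv ell alpha /\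
  big_preimage PS thinv ell alpha.

(* Main.v *)
Require Import Defs.
From Stdlib Require Import Reals List Arith.
From Stdlib Require Import Lia Lra ClassicalEpsilon Classical FunctionalExtensionality PropExtensionality.
Open Scope R_scope.

Section Meas.
Variable Omega : Type.
Variable PS : probability_space Omega.

Lemma pred_ext (A B : Omega -> Prop) : (forall x, A x <-> B x) -> A = B.
Proof. intros H; apply functional_extensionality; intros x; apply propositional_extensionality; auto. Qed.

Lemma meas_ext A B : (forall x, A x <-> B x) -> meas PS A -> meas PS B.
Proof. intros H; rewrite (pred_ext A B H); auto. Qed.

Lemma P_ext A B : (forall x, A x <-> B x) -> P PS A = P PS B.
Proof. intros H; rewrite (pred_ext A B H); auto. Qed.

Lemma meas_empty : meas PS (fun _ => False).
Proof. eapply meas_ext; [|apply meas_compl, meas_full]. simpl; tauto. Qed.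

Lemma meas_cinter (A : nat -> Omega -> Prop) : (forall n, meas PS (A n)) -> meas PS (fun x => forall n, A n x).
Proof.
  intros H. eapply meas_ext; [| apply meas_compl, meas_union; intros n; apply meas_compl, H].
  intros x; simpl; split.
  - intros Hn n. apply NNPP; intros Hc; apply Hn; eauto.
  - intros Hn [n Hc]; auto.
Qed.

Lemma meas_or A B : meas PS A -> meas PS B -> meas PS (fun x => A x \/ B x).
Proof.
  intros HA HB. eapply meas_ext; [| apply (meas_union _ PS (fun n => match n with 0%nat => A | _ => B end)); intros [|n]; auto].
  intros x; simpl; split.
  - intros [[|n] H]; auto.
  - intros [H|H]; [exists 0%nat | exists 1%nat]; auto.
Qed.

Lemma meas_and A B : meas PS A -> meas PS B -> meas PS (fun x => A x /\ B x).
Proof.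
  intros HA HB. apply (meas_ext (fun x => ~ (~ A x \/ ~ B x))).
  - intros x; split. intros H; split; apply NNPP; intro; apply H; auto. intros [? ?] [?|?]; auto.
  - apply meas_compl, meas_or; apply meas_compl; auto.
Qed.

Lemma const_sum c l : infinite_sum (fun _ => c) l -> c = 0.
Proof.
  intros H. destruct (Req_dec c 0) as [|Hc]; auto. exfalso.
  destruct (H (Rabs c / 2)) as [N HN]. { assert (Rabs c > 0) by (apply Rabs_pos_lt; auto). lra. }
  specialize (HN N ltac:(lia)) as H1. specialize (HN (S N) ltac:(lia)) as H2.
  simpl in H2. unfold Rdist in *. revert H1 H2. generalize (sum_f_R0 (fun _ => c) N). intros s.
  split_Rabs; lra.
Qed.

Lemma P_empty : P PS (fun _ => False) = 0.
Proof.
  pose proof (P_sigma_additive _ PS (fun _ => fun _ => False) (fun _ => meas_empty) (fun m n x H _ => False_ind _ H)) as H.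
  simpl in H. rewrite (P_ext (fun x => exists _ : nat, False) (fun _ => False)) in H.
  - eapply const_sum; eauto.
  - intros x; split; [intros [_ []]|tauto].
Qed.

Lemma sum2 (g : nat -> R) l : (forall n, (2 <= n)%nat -> g n = 0) -> infinite_sum g l -> l = g 0%nat + g 1%nat.
Proof.
  intros H0 H. eapply uniqueness_sum; eauto.
  intros eps He. exists 1%nat. intros n Hn.
  assert (sum_f_R0 g n = g 0%nat + g 1%nat) as ->.
  { induction n. lia. destruct n. reflexivity. change (sum_f_R0 g (S (S n))) with (sum_f_R0 g (S n) + g (S (S n))). rewrite IHn by lia. rewrite (H0 (S (S n))) by lia. lra. }
  unfold Rdist. rewrite Rminus_diag, Rabs_R0; auto.
Qed.

Lemma P_add2 A B : meas PS A -> meas PS B -> (forall x, A x -> B x -> False) ->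
  P PS (fun x => A x \/ B x) = P PS A + P PS B.
Proof.
  intros HA HB Hd.
  set (F := fun n => match n with 0%nat => A | 1%nat => B | _ => fun _ => False end).
  assert (HF : forall n, meas PS (F n)) by (intros [|[|n]]; simpl; auto using meas_empty).
  assert (Hdis : forall m n x, F m x -> F n x -> m = n).
  { intros [|[|m]] [|[|n]] x; simpl; try tauto; intros; exfalso; eauto. }
  pose proof (P_sigma_additive _ PS F HF Hdis) as H.
  apply sum2 in H.
  - simpl in H. rewrite <- H. apply P_ext. intros x; split.
    + intros [Hx|Hx]; [exists 0%nat|exists 1%nat]; auto.
    + intros [[|[|n]] Hx]; simpl in Hx; tauto.
  - intros [|[|n]] Hn; try lia. apply P_empty.
Qed.

Lemma P_mono A B : meas PS A -> meas PS B -> (forall x, A x -> B x) -> P PS A <= P PS B.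
Proof.
  intros HA HB H.
  rewrite (P_ext B (fun x => A x \/ (B x /\ ~ A x))).
  - rewrite P_add2; auto using meas_and, meas_compl.
    pose proof (P_nonneg _ PS (fun x => B x /\ ~ A x) ltac:(auto using meas_and, meas_compl)). lra.
    intros x ? [? ?]; auto.
  - intros x; split; [|firstorder]. intros Hb. destruct (classic (A x)); auto.
Qed.

Lemma P_compl A : meas PS A -> P PS (fun x => ~ A x) = 1 - P PS A.
Proof.
  intros HA. rewrite <- (P_full _ PS).
  rewrite (P_ext (fun _ => True) (fun x => A x \/ ~ A x)) by (intros x; split; auto; intros; apply classic).
  rewrite P_add2; auto using meas_compl. lra.
Qed.

Lemma least_wit (Q : nat -> Prop) : forall N n, (n <= N)%nat -> Q n -> exists m, Q m /\ forall k, (k < m)%nat -> ~ Q k.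
Proof.
  induction N; intros n Hn Hq.
  - exists n; split; auto; intros; lia.
  - destruct (classic (exists k, (k < n)%nat /\ Q k)) as [[k [Hk Hqk]]|Hno].
    + apply (IHN k); auto; lia.
    + exists n; split; auto. intros k Hk Hqk; apply Hno; eauto.
Qed.

Lemma P_null_union (A : nat -> Omega -> Prop) : (forall n, meas PS (A n)) -> (forall n, P PS (A n) = 0) ->
  P PS (fun x => exists n, A n x) = 0.
Proof.
  intros HA H0.
  set (D := fun n x => A n x /\ forall k, (k < n)%nat -> ~ A k x).
  assert (HD : forall n, meas PS (D n)).
  { intros n. apply meas_and; auto. apply meas_cinter. intros k.
    destruct (lt_dec k n).
    - eapply meas_ext; [|apply meas_compl, (HA k)]. intros x; simpl; tauto.
    - eapply meas_ext; [|apply meas_full]. intros x; simpl; split; auto; intros; lia. }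
  assert (Hdis : forall m n x, D m x -> D n x -> m = n).
  { intros m n x [Am Hm] [An Hn]. destruct (lt_eq_lt_dec m n) as [[Hl|]|Hl]; auto.
    - exfalso; eapply Hn; eauto.
    - exfalso; eapply Hm; eauto. }
  pose proof (P_sigma_additive _ PS D HD Hdis) as H.
  assert (HDz : forall n, P PS (D n) = 0).
  { intros n. pose proof (P_mono (D n) (A n) (HD n) (HA n) ltac:(intros x [? ?]; auto)).
    pose proof (P_nonneg _ PS (D n) (HD n)). rewrite H0 in *. lra. }
  rewrite (P_ext _ (fun x => exists n, D n x)).
  - eapply uniqueness_sum; eauto. intros eps He; exists 0%nat; intros n _.
    assert (sum_f_R0 (fun n => P PS (D n)) n = 0) as ->.
    { induction n; simpl; rewrite HDz; [|rewrite IHn]; lra. }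
    unfold Rdist; rewrite Rminus_diag, Rabs_R0; auto.
  - intros x; split.
    + intros [n Hn]. destruct (least_wit (fun n => A n x) n n (le_n _) Hn) as [m [Hm1 Hm2]].
      exists m; split; auto.
    + intros [n [Hn _]]; eauto.
Qed.

Lemma P_pos_exists A Z : meas PS A -> meas PS Z -> P PS A > 0 -> P PS Z = 0 -> exists x, A x /\ ~ Z x.
Proof.
  intros HA HZ Hp Hz. apply NNPP; intros Hn.
  assert (P PS A <= P PS Z). { apply P_mono; auto. intros x Hx; apply NNPP; intros Hc; apply Hn; eauto. }
  lra.
Qed.

Lemma P_pos_union (A : nat -> Omega -> Prop) B : (forall n, meas PS (A n)) -> meas PS B -> P PS B > 0 ->
  (forall x, B x -> exists n, A n x) -> exists n, P PS (A n) > 0.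
Proof.
  intros HA HB Hp Hs. apply NNPP; intros Hn.
  assert (forall n, P PS (A n) = 0).
  { intros n. pose proof (P_nonneg _ PS _ (HA n)). destruct (Rle_lt_or_eq_dec 0 _ H); auto.
    exfalso; apply Hn; eauto. }
  pose proof (P_null_union A HA H).
  pose proof (P_mono B _ HB (meas_union _ PS A HA) Hs). lra.
Qed.

Lemma null_or A B : meas PS A -> meas PS B -> P PS A = 0 -> P PS B = 0 -> P PS (fun x => A x \/ B x) = 0.
Proof.
  intros HA HB Ha Hb.
  rewrite (P_ext _ (fun x => exists n, (match n with 0%nat => A | _ => B end) x)).
  - apply P_null_union; intros [|n]; auto.
  - intros x; split; [intros [H|H]; [exists 0%nat|exists 1%nat]; auto | intros [[|n] H]; auto].
Qed.

Lemma meas_cond (Q : Prop) A : meas PS A -> meas PS (fun w => Q /\ A w).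
Proof.
  intros HA. destruct (classic Q) as [HQ|HQ].
  - eapply meas_ext; [|exact HA]. intros x; simpl; tauto.
  - eapply meas_ext; [|exact meas_empty]. intros x; simpl; tauto.
Qed.

Lemma meas_imp A B : meas PS A -> meas PS B -> meas PS (fun w => A w -> B w).
Proof.
  intros HA HB. apply (meas_ext (fun w => ~ A w \/ B w)).
  - intros x; split. intros [H|H] H'; [contradiction|auto]. intros H. destruct (classic (A x)); auto.
  - apply meas_or; auto. apply meas_compl; auto.
Qed.

End Meas.


Section Rec.
Variable Omega : Type.
Variable PS : probability_space Omega.
Variable f : Omega -> Omega.
Hypothesis Hm : forall A, meas PS A -> meas PS (fun w => A (f w)).
Hypothesis Hp : forall A, meas PS A -> P PS (fun w => A (f w)) = P PS A.
Hypothesis Herg : forall A, meas PS A -> (forall w, A (f w) <-> A w) -> P PS A = 0 \/ P PS A = 1.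

Lemma iter_pres n : forall A, meas PS A -> meas PS (fun w => A (Nat.iter n f w)) /\ P PS (fun w => A (Nat.iter n f w)) = P PS A.
Proof.
  induction n; intros A HA; simpl; auto.
  destruct (IHn (fun w => A (f w)) (Hm A HA)) as [H1 H2]. split; auto. rewrite H2; auto.
Qed.

Lemma last_visit (Q : nat -> Prop) : forall K, (forall k, (K <= k)%nat -> ~ Q k) -> (exists n, Q n) ->
  exists n, Q n /\ forall k, (n < k)%nat -> ~ Q k.
Proof.
  induction K; intros H [n Hn].
  - exfalso; apply (H n); auto; lia.
  - destruct (classic (Q K)) as [HQ|HQ].
    + exists K; split; [exact HQ|]. intros k Hk; apply H; lia.
    + apply IHK; [|exists n; exact Hn]. intros k Hk. destruct (Nat.eq_dec k K) as [->|Hne]; [exact HQ|]. apply H; lia.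
Qed.

Lemma recurrence G : meas PS G -> P PS G > 0 ->
  exists Z, meas PS Z /\ P PS Z = 0 /\ forall w, ~ Z w -> forall K, exists k, (K <= k)%nat /\ G (Nat.iter k f w).
Proof.
  intros HG HPG.
  set (W := fun w => G w /\ forall k, ~ G (Nat.iter (S k) f w)).
  assert (HW : meas PS W).
  { apply meas_and; auto. apply meas_cinter; intros k. apply meas_compl. apply (iter_pres (S k) G HG). }
  assert (HW0 : P PS W = 0).
  { set (A := fun n w => W (Nat.iter n f w)).
    assert (HA : forall n, meas PS (A n)) by (intros n; apply (iter_pres n W HW)).
    assert (Hdis : forall m n x, A m x -> A n x -> m = n).
    { assert (forall m n x, (m < n)%nat -> A m x -> A n x -> False).
      { intros m n x Hmn [_ Hm'] [Hn' _].
        apply (Hm' (n - S m)%nat). rewrite <- Nat.iter_add. replace (S (n - S m) + m)%nat with n by lia. auto. }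
      intros m n x Hmx Hnx. destruct (lt_eq_lt_dec m n) as [[Hl|]|Hl]; auto; exfalso; eauto. }
    pose proof (P_sigma_additive _ PS A HA Hdis) as Hs.
    assert (Hc : forall n, P PS (A n) = P PS W) by (intros n; apply (iter_pres n W HW)).
    assert (infinite_sum (fun _ => P PS W) (P PS (fun x => exists n, A n x))).
    { intros eps He; destruct (Hs eps He) as [N HN]; exists N; intros n Hn.
      specialize (HN n Hn). replace (sum_f_R0 (fun _ => P PS W) n) with (sum_f_R0 (fun n => P PS (A n)) n); auto.
      apply sum_eq; intros; auto. }
    eapply const_sum; eauto. }
  set (D := fun w => forall K, exists k, (K <= k)%nat /\ G (Nat.iter k f w)).
  assert (HD : meas PS D).
  { apply meas_cinter; intros K. apply meas_union; intros k.
    destruct (le_dec K k).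
    - eapply meas_ext; [|apply (iter_pres k G HG)]. intros x; simpl; tauto.
    - eapply meas_ext; [|apply meas_empty]. intros x; simpl; split; [tauto|intros [? ?]; lia]. }
  assert (Hinv : forall w, D (f w) <-> D w).
  { intros w; split.
    - intros H K. destruct (H K) as [k [Hk Hg]]. exists (S k); split; [lia|]. rewrite Nat.iter_succ_r; auto.
    - intros H K. destruct (H (S K)) as [[|k] [Hk Hg]]; [lia|]. exists k; split; [lia|]. rewrite <- Nat.iter_succ_r; auto. }
  assert (HGD : P PS (fun w => G w /\ ~ D w) = 0).
  { assert (Hm2 : meas PS (fun w => G w /\ ~ D w)) by (apply meas_and; auto; apply meas_compl; auto).
    pose proof (P_nonneg _ PS _ Hm2).
    assert (Hn : forall n, meas PS (fun w => W (Nat.iter n f w)) /\ P PS (fun w => W (Nat.iter n f w)) = 0).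
    { intros n; destruct (iter_pres n W HW) as [? ->]; auto. }
    pose proof (P_null_union _ PS (fun n w => W (Nat.iter n f w)) (fun n => proj1 (Hn n)) (fun n => proj2 (Hn n))).
    pose proof (P_mono _ PS (fun w => G w /\ ~ D w) _ Hm2 (meas_union _ PS _ (fun n => proj1 (Hn n)))).
    enough (P PS (fun w => G w /\ ~ D w) <= 0) by lra.
    rewrite <- H0. apply H1. intros w [Hg Hd].
    assert (exists K, forall k, (K <= k)%nat -> ~ G (Nat.iter k f w)) as [K HK].
    { apply NNPP; intros Hc; apply Hd. intros K. apply NNPP; intros Hc2. apply Hc. exists K.
      intros k Hk Hgk; apply Hc2; eauto. }
    destruct (last_visit (fun k => G (Nat.iter k f w)) K HK (ex_intro _ 0%nat Hg)) as [n [Hgn Hlast]].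
    exists n. split; auto. intros k Hk. apply (Hlast (S k + n)%nat); [lia|]. rewrite Nat.iter_add; auto. }
  destruct (Herg D HD (fun w => Hinv w)) as [HD0|HD1].
  - exfalso.
    assert (P PS (fun w => D w \/ (G w /\ ~ D w)) = 0).
    { apply null_or; auto. apply meas_and; auto; apply meas_compl; auto. }
    pose proof (P_mono _ PS G _ HG (meas_or _ PS _ _ HD (meas_and _ PS _ _ HG (meas_compl _ PS _ HD)))).
    assert (P PS G <= 0). { rewrite <- H. apply H0. intros w Hg. destruct (classic (D w)); auto. }
    lra.
  - exists (fun w => ~ D w). split; [apply meas_compl; auto|]. split.
    + rewrite P_compl; auto. lra.
    + intros w Hw. apply NNPP in Hw. exact Hw.
Qed.

End Rec.


Section Paths.
Variable Omega : Type.
Variable theta : Omega -> Omega.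
Variable ell : Omega -> option nat.
Variable alpha : Omega -> nat -> nat -> bool.

Definition pathok (w : Omega) (x : nat -> nat) (n : nat) : Prop :=
  forall i, (i < n)%nat -> lt_len (x i) (ell (Nat.iter i theta w)) /\
    alpha (Nat.iter i theta w) (x i) (x (S i)) = true.

Lemma path_Wab w x n : (1 <= n)%nat -> pathok w x n -> Wab_nonempty theta ell alpha n w (x 0%nat) (x n).
Proof.
  intros Hn Hp.
  assert (Hnth : forall i, (i < n)%nat -> nth i (map x (seq 0 n)) 0%nat = x i).
  { intros i Hi. rewrite (nth_indep _ _ (x 0%nat)) by (rewrite length_map, length_seq; auto).
    rewrite map_nth, seq_nth by auto. reflexivity. }
  exists (map x (seq 0 n)). split; [rewrite length_map, length_seq; auto|]. split; [split|split].
  - intros i Hi. rewrite length_map, length_seq in Hi. rewrite Hnth by auto. apply Hp; auto.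
  - intros i Hi. rewrite length_map, length_seq in Hi. rewrite !Hnth by lia. apply Hp; lia.
  - apply Hnth; lia.
  - rewrite Hnth by lia. destruct (Hp (n - 1)%nat ltac:(lia)) as [_ H]. replace (S (n - 1)) with n in H by lia. auto.
Qed.

Lemma inX_path w x n : in_X theta ell alpha w x -> pathok w x n.
Proof. intros H i _; apply H. Qed.

Lemma path_snoc w x n b : pathok w x n -> lt_len (x n) (ell (Nat.iter n theta w)) ->
  alpha (Nat.iter n theta w) (x n) b = true ->
  pathok w (fun i => if Nat.eqb i (S n) then b else x i) (S n).
Proof.
  intros Hp Hl Ha i Hi.
  assert (Nat.eqb i (S n) = false) as -> by (apply Nat.eqb_neq; lia).
  destruct (Nat.eq_dec i n) as [->|Hne].
  - rewrite Nat.eqb_refl. auto.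
  - assert (Nat.eqb (S i) (S n) = false) as -> by (apply Nat.eqb_neq; lia). apply Hp; lia.
Qed.

Lemma path_cons v x n b : lt_len b (ell v) -> alpha v b (x 0%nat) = true -> pathok (theta v) x n ->
  pathok v (fun i => match i with 0%nat => b | S j => x j end) (S n).
Proof.
  intros Hl Ha Hp [|i] Hi; simpl; auto.
  replace (theta (Nat.iter i theta v)) with (Nat.iter i theta (theta v)) by (rewrite <- Nat.iter_succ_r; reflexivity).
  apply Hp; lia.
Qed.

End Paths.


Arguments meas_ext {Omega PS}. Arguments P_ext {Omega PS}. Arguments meas_empty {Omega PS}.
Arguments meas_cinter {Omega PS}. Arguments meas_or {Omega PS}. Arguments meas_and {Omega PS}.
Arguments P_mono {Omega PS}. Arguments P_null_union {Omega PS}. Arguments P_pos_exists {Omega PS}.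
Arguments P_pos_union {Omega PS}. Arguments null_or {Omega PS}. Arguments meas_cond {Omega PS}.
Arguments meas_imp {Omega PS}. Arguments recurrence {Omega PS}. Arguments iter_pres {Omega PS}.

Fixpoint sumto (g : nat -> nat) (M : nat) : nat :=
  match M with 0%nat => g 0%nat | S m => (sumto g m + g (S m))%nat end.

Lemma sumto_le g M h : (h <= M)%nat -> (g h <= sumto g M)%nat.
Proof.
  induction M; intros H; simpl.
  - replace h with 0%nat by lia; lia.
  - destruct (Nat.eq_dec h (S M)) as [->|]; [lia|]. specialize (IHM ltac:(lia)); lia.
Qed.

Definition MixP {Omega : Type} (PS : probability_space Omega)
  (theta : Omega -> Omega) (ell : Omega -> option nat)
  (alpha : Omega -> nat -> nat -> bool) (a b : nat) (N : Omega -> nat) : Prop :=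
    (forall k, meas PS (fun w => N w = k)) /\
    forall w n, Omega_sym ell a w -> (N w <= n)%nat ->
      Omega_sym ell b (Nat.iter n theta w) ->
      exists x, in_X theta ell alpha w x /\ x 0%nat = a /\ x n = b.

Section Main.
Variable Omega : Type.
Variable PS : probability_space Omega.
Variables theta thinv : Omega -> Omega.
Variable ell : Omega -> option nat.
Variable alpha : Omega -> nat -> nat -> bool.
Hypothesis Hth : invertible_mpt_ergodic PS theta thinv.
Hypothesis Hdata : random_shift_data PS theta ell alpha.
Hypothesis Hbip : bip_property PS theta thinv ell alpha.

Lemma Hinv1 : forall w, thinv (theta w) = w. Proof. apply Hth. Qed.
Lemma Hinv2 : forall w, theta (thinv w) = w. Proof. apply Hth. Qed.
Lemma Hmth : forall A, meas PS A -> meas PS (fun w => A (theta w)). Proof. apply Hth. Qed.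
Lemma Hminv : forall A, meas PS A -> meas PS (fun w => A (thinv w)). Proof. apply Hth. Qed.
Lemma Hpth : forall A, meas PS A -> P PS (fun w => A (theta w)) = P PS A. Proof. apply Hth. Qed.
Lemma Hergth : forall A, meas PS A -> (forall w, A (theta w) <-> A w) -> P PS A = 0 \/ P PS A = 1.
Proof. apply Hth. Qed.
Lemma Hpinv : forall A, meas PS A -> P PS (fun w => A (thinv w)) = P PS A.
Proof.
  intros A HA. rewrite <- (Hpth _ (Hminv A HA)). apply P_ext. intros x; rewrite Hinv1; tauto.
Qed.
Lemma Herginv : forall A, meas PS A -> (forall w, A (thinv w) <-> A w) -> P PS A = 0 \/ P PS A = 1.
Proof.
  intros A HA H. apply Hergth; auto. intros w. rewrite <- (H (theta w)), Hinv1. tauto.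
Qed.

Lemma meas_sym b : meas PS (fun w => lt_len b (ell w)).
Proof.
  destruct Hdata as [Hmell _].
  apply (meas_ext (fun w => (exists k, (b < k)%nat /\ ell w = Some k) \/ ~ exists k, ell w = Some k)).
  - intros w; unfold lt_len; destruct (ell w) as [m|]; split.
    + intros [[k [Hk He]]|Hn]; [inversion He; subst; auto|exfalso; eauto].
    + intros Hm; left; eauto.
    + auto.
    + intros _; right; intros [k Hk]; discriminate.
  - apply meas_or.
    + apply meas_union; intros k. apply meas_cond; auto.
    + apply meas_compl, meas_union; intros k; auto.
Qed.

Lemma meas_al i j : meas PS (fun w => alpha w i j = true).
Proof. apply Hdata. Qed.

Lemma iter_cancel m w : Nat.iter m theta (Nat.iter m thinv w) = w.
Proof.
  induction m; auto. change (Nat.iter (S m) thinv w) with (thinv (Nat.iter m thinv w)). rewrite Nat.iter_succ_r, Hinv2; auto.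
Qed.


Lemma pres_th n A : meas PS A -> meas PS (fun w => A (Nat.iter n theta w)) /\ P PS (fun w => A (Nat.iter n theta w)) = P PS A.
Proof. apply (iter_pres theta Hmth Hpth). Qed.
Lemma pres_inv n A : meas PS A -> meas PS (fun w => A (Nat.iter n thinv w)) /\ P PS (fun w => A (Nat.iter n thinv w)) = P PS A.
Proof. apply (iter_pres thinv Hminv Hpinv). Qed.

Definition Z0 w := exists b j, ~ in_W1 PS ell b /\
   (lt_len b (ell (Nat.iter j theta w)) \/ lt_len b (ell (Nat.iter j thinv w))).

Lemma Z0_null : meas PS Z0 /\ P PS Z0 = 0.
Proof.
  set (A := fun b j w => ~ in_W1 PS ell b /\
   (lt_len b (ell (Nat.iter j theta w)) \/ lt_len b (ell (Nat.iter j thinv w)))).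
  assert (HA : forall b j, meas PS (A b j) /\ P PS (A b j) = 0).
  { intros b j. assert (Hm : meas PS (A b j)).
    { apply meas_cond, meas_or; [apply (pres_th j _ (meas_sym b))|apply (pres_inv j _ (meas_sym b))]. }
    split; auto. destruct (classic (in_W1 PS ell b)) as [Hw|Hw].
    - rewrite (P_ext _ (fun _ => False)) by (intros x; unfold A; tauto). apply P_empty.
    - assert (Hb0 : P PS (fun w => lt_len b (ell w)) = 0).
      { pose proof (P_nonneg _ PS _ (meas_sym b)). unfold in_W1, Omega_sym in Hw. lra. }
      rewrite (P_ext _ (fun w => lt_len b (ell (Nat.iter j theta w)) \/ lt_len b (ell (Nat.iter j thinv w))))
        by (intros x; unfold A; tauto).
      destruct (pres_th j _ (meas_sym b)) as [H1 H2]. destruct (pres_inv j _ (meas_sym b)) as [H3 H4].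
      apply null_or; auto; congruence. }
  assert (HB : forall b, meas PS (fun w => exists j, A b j w) /\ P PS (fun w => exists j, A b j w) = 0).
  { intros b. split. apply meas_union; intros j; apply HA. apply P_null_union; intros j; apply HA. }
  assert (Z0 = fun w => exists b, exists j, A b j w) as ->.
  { apply pred_ext; intros w; unfold Z0, A; tauto. }
  split. apply meas_union; intros b; apply HB. apply P_null_union; intros b; apply HB.
Qed.


Definition NN (a c : nat) : Omega -> nat :=
  epsilon (inhabits (fun _ : Omega => 0%nat)) (MixP PS theta ell alpha a c).

Lemma NN_spec a c : in_W1 PS ell a -> in_W1 PS ell c -> MixP PS theta ell alpha a c (NN a c).
Proof.
  intros Ha Hc. unfold NN. apply epsilon_spec. destruct Hbip as [Hmix _]. apply (Hmix a c Ha Hc).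
Qed.

Definition E j v := lt_len j (ell v) /\ ~ exists i, lt_len i (ell (thinv v)) /\ alpha (thinv v) i j = true.

Lemma meas_E j : meas PS (E j).
Proof.
  apply meas_and; [apply meas_sym|]. apply meas_compl, meas_union; intros i.
  apply meas_and; [apply (Hminv _ (meas_sym i))|apply (Hminv _ (meas_al i j))].
Qed.

Lemma E_null a j : in_W1 PS ell a -> P PS (E j) = 0.
Proof.
  intros Ha. pose proof (P_nonneg _ PS _ (meas_E j)) as H0.
  destruct (Rle_lt_or_eq_dec _ _ H0) as [Hp|]; auto. exfalso.
  assert (Hj : in_W1 PS ell j).
  { unfold in_W1, Omega_sym. pose proof (P_mono _ _ (meas_E j) (meas_sym j) (fun x H => proj1 H)). lra. }
  destruct (recurrence theta Hmth Hpth Hergth (E j) (meas_E j) Hp) as [Z [HZm [HZ0 HZ]]].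
  destruct (P_pos_exists _ Z (meas_sym a) HZm Ha HZ0) as [w0 [Hw0 Hnz]].
  destruct (NN_spec a j Ha Hj) as [_ Hmx].
  destruct (HZ w0 Hnz (S (NN a j w0))) as [[|k] [Hk HE]]; [lia|].
  destruct (Hmx w0 (S k) Hw0 ltac:(lia) (proj1 HE)) as [x [HX [Hx0 Hxk]]].
  apply (proj2 HE). exists (x k). simpl. rewrite Hinv1. rewrite <- Hxk. apply HX.
Qed.

Definition Z1 w := exists j n, E j (Nat.iter n theta w).

Lemma Z1_null a : in_W1 PS ell a -> meas PS Z1 /\ P PS Z1 = 0.
Proof.
  intros Ha.
  assert (HB : forall j, meas PS (fun w => exists n, E j (Nat.iter n theta w)) /\ P PS (fun w => exists n, E j (Nat.iter n theta w)) = 0).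
  { intros j. split. apply meas_union; intros n; apply (pres_th n _ (meas_E j)).
    apply P_null_union; intros n; [apply (pres_th n _ (meas_E j))|].
    destruct (pres_th n _ (meas_E j)) as [_ ->]. apply (E_null a j Ha). }
  split. apply meas_union; intros b; apply HB. apply P_null_union; intros b; apply HB.
Qed.


Definition G M v := forall c, lt_len c (ell v) ->
  exists b, (b <= M)%nat /\ (lt_len b (ell (thinv v)) /\ alpha (thinv v) b c = true).

Lemma meas_G M : meas PS (G M).
Proof.
  apply meas_cinter; intros c. apply meas_imp; [apply meas_sym|].
  apply meas_union; intros b. apply meas_cond, meas_and; [apply (Hminv _ (meas_sym b))|apply (Hminv _ (meas_al b c))].
Qed.

Lemma list_max_in l b : In b l -> (b <= list_max l)%nat.
Proof.
  intros H. pose proof (proj1 (list_max_le l (list_max l)) (le_n _)) as HF.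
  rewrite Forall_forall in HF; auto.
Qed.

Lemma G_pos : exists M, P PS (G M) > 0.
Proof.
  destruct Hbip as [_ [_ [Obp [I [Hm [Hp HI]]]]]].
  apply (P_pos_union G Obp meas_G Hm Hp). intros w Hw. exists (list_max (I w)).
  intros c Hc. destruct (HI w Hw) as [H1 H2]. destruct (H2 c Hc) as [b [Hb Hab]].
  exists b. split; [apply list_max_in; auto|]. split; auto.
Qed.

Definition G' M v := forall c, lt_len c (ell (thinv v)) ->
  exists b, (b <= M)%nat /\ (lt_len b (ell v) /\ alpha (thinv v) c b = true).

Lemma meas_G' M : meas PS (G' M).
Proof.
  apply meas_cinter; intros c. apply meas_imp; [apply (Hminv _ (meas_sym c))|].
  apply meas_union; intros b. apply meas_cond, meas_and; [apply (meas_sym b)|apply (Hminv _ (meas_al c b))].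
Qed.

Lemma G'_pos : exists M, P PS (G' M) > 0.
Proof.
  destruct Hbip as [_ [[Obi [I [Hm [Hp HI]]]] _]].
  apply (P_pos_union G' Obi meas_G' Hm Hp). intros w Hw. exists (list_max (I w)).
  intros c Hc. destruct (HI w Hw) as [H1 H2]. destruct (H2 c Hc) as [b [Hb Hab]].
  exists b. split; [apply list_max_in; auto|]. split; auto.
Qed.

Definition G'' a M K v := G' M v /\ forall h, (h <= M)%nat -> in_W1 PS ell h -> (NN h a v <= K)%nat.

Lemma meas_G'' a M K : in_W1 PS ell a -> meas PS (G'' a M K).
Proof.
  intros Ha. apply meas_and; [apply meas_G'|]. apply meas_cinter; intros h.
  destruct (classic ((h <= M)%nat /\ in_W1 PS ell h)) as [[H1 H2]|Hn].
  - apply (meas_ext (fun v => exists k, (k <= K)%nat /\ NN h a v = k)).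
    + intros v; split. intros [k [Hk <-]] _ _; auto. intros H; exists (NN h a v); auto.
    + apply meas_union; intros k; apply meas_cond. apply (NN_spec h a H2 Ha).
  - apply (meas_ext (fun _ => True)); [|apply meas_full]. intros v; split; auto. intros _ Hh Hw; exfalso; auto.
Qed.

Lemma G''_pos a : in_W1 PS ell a -> exists M K, P PS (G'' a M K) > 0.
Proof.
  intros Ha. destruct G'_pos as [M HM]. exists M.
  apply (P_pos_union (G'' a M) (G' M) (fun K => meas_G'' a M K Ha) (meas_G' M) HM).
  intros v Hv. exists (sumto (fun h => NN h a v) M). split; auto.
  intros h Hh _. apply (sumto_le (fun h => NN h a v)); auto.
Qed.


Lemma main_aux : forall a : nat, in_W1 PS ell a ->
  exists Null : Omega -> Prop, meas PS Null /\ P PS Null = 0 /\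
  forall w, Omega_sym ell a w -> ~ Null w ->
  exists al be : nat,
    (forall n b, (al <= n)%nat -> lt_len b (ell (Nat.iter n theta w)) ->
       Wab_nonempty theta ell alpha n w a b) /\
    (forall n b, (be <= n)%nat -> lt_len b (ell (Nat.iter n thinv w)) ->
       Wab_nonempty theta ell alpha n (Nat.iter n thinv w) b a).
Proof.
  intros a Ha.
  destruct Z0_null as [HZ0m HZ0p]. destruct (Z1_null a Ha) as [HZ1m HZ1p].
  destruct G_pos as [M HM].
  destruct (recurrence theta Hmth Hpth Hergth (G M) (meas_G M) HM) as [Z2 [HZ2m [HZ2p HZ2]]].
  destruct (G''_pos a Ha) as [M' [K0 HK0]].
  destruct (recurrence thinv Hminv Hpinv Herginv (G'' a M' K0) (meas_G'' a M' K0 Ha) HK0) as [Z3 [HZ3m [HZ3p HZ3]]].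
  exists (fun w => Z0 w \/ Z1 w \/ Z2 w \/ Z3 w).
  split. { repeat apply meas_or; auto. }
  split. { repeat apply null_or; auto; repeat apply meas_or; auto. }
  intros w Hwa HN.
  assert (nZ0 : ~ Z0 w) by tauto. assert (nZ1 : ~ Z1 w) by tauto.
  assert (nZ2 : ~ Z2 w) by tauto. assert (nZ3 : ~ Z3 w) by tauto.
  destruct (HZ2 w nZ2 (S (sumto (fun c => NN a c w) M))) as [[|k'] [Hk HGk]]; [lia|].
  destruct (HZ3 w nZ3 K0) as [m [Hm HGm]].
  exists (S k'), (S m). split.
  - assert (aux : forall d b, lt_len b (ell (Nat.iter (S k' + d) theta w)) ->
       exists x, pathok _ theta ell alpha w x (S k' + d) /\ x 0%nat = a /\ x (S k' + d)%nat = b).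
    { induction d; intros b Hb.
      - rewrite Nat.add_0_r in *. destruct (HGk b Hb) as [c [HcM [Hc Hcb]]].
        simpl in Hc, Hcb. rewrite Hinv1 in Hc, Hcb.
        assert (HcW : in_W1 PS ell c). { apply NNPP; intros Hn; apply nZ0. exists c, k'. auto. }
        destruct (NN_spec a c Ha HcW) as [_ Hmx].
        assert (HNc : (NN a c w <= k')%nat). { pose proof (sumto_le (fun c => NN a c w) M c HcM). simpl in *. lia. }
        destruct (Hmx w k' Hwa HNc Hc) as [x [HX [Hx0 Hxk]]].
        exists (fun i => if Nat.eqb i (S k') then b else x i). split; [|split].
        + apply path_snoc; [apply inX_path; auto|rewrite Hxk; auto|rewrite Hxk; auto].
        + simpl. auto.
        + rewrite Nat.eqb_refl; auto.
      - assert (HnE : ~ E b (Nat.iter (S (S k' + d)) theta w)).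
        { intros HE; apply nZ1. exists b, (S (S k' + d)); auto. }
        replace (S k' + S d)%nat with (S (S k' + d)) in * by lia.
        assert (exists i, lt_len i (ell (thinv (Nat.iter (S (S k' + d)) theta w))) /\
                    alpha (thinv (Nat.iter (S (S k' + d)) theta w)) i b = true) as [i [Hi Hib]].
        { apply NNPP; intros Hn; apply HnE; split; auto. }
        simpl in Hi, Hib. rewrite Hinv1 in Hi, Hib.
        destruct (IHd i Hi) as [x [Hp [Hx0 Hxn]]].
        exists (fun j => if Nat.eqb j (S (S k' + d)) then b else x j). split; [|split].
        + apply path_snoc; [auto|rewrite Hxn; auto|rewrite Hxn; auto].
        + simpl. auto.
        + rewrite Nat.eqb_refl; auto. }
    intros n b Hn Hb. replace n with (S k' + (n - S k'))%nat in * by lia.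
    destruct (aux _ b Hb) as [x [Hp [Hx0 Hxn]]]. rewrite <- Hx0, <- Hxn. apply path_Wab; auto; lia.
  - assert (aux : forall d b, lt_len b (ell (Nat.iter (S m + d) thinv w)) ->
       exists x, pathok _ theta ell alpha (Nat.iter (S m + d) thinv w) x (S m + d) /\ x 0%nat = b /\ x (S m + d)%nat = a).
    { induction d; intros b Hb.
      - rewrite Nat.add_0_r in *. destruct HGm as [HG' HNb].
        change (Nat.iter (S m) thinv w) with (thinv (Nat.iter m thinv w)) in *.
        destruct (HG' b Hb) as [h [HhM [Hh Hbh]]].
        assert (HhW : in_W1 PS ell h). { apply NNPP; intros Hn; apply nZ0. exists h, m. auto. }
        destruct (NN_spec h a HhW Ha) as [_ Hmx].
        specialize (HNb h HhM HhW).
        assert (Haw : Omega_sym ell a (Nat.iter m theta (Nat.iter m thinv w))) by (rewrite iter_cancel; auto).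
        destruct (Hmx _ m Hh ltac:(lia) Haw) as [x [HX [Hx0 Hxm]]].
        exists (fun i => match i with 0%nat => b | S j => x j end). split; [|split]; auto.
        apply path_cons; [auto|rewrite Hx0; auto|]. rewrite Hinv2. apply inX_path; auto.
      - replace (S m + S d)%nat with (S (S m + d)) in * by lia.
        change (Nat.iter (S (S m + d)) thinv w) with (thinv (Nat.iter (S m + d) thinv w)) in *.
        destruct Hdata as [_ [_ [_ Hrow]]].
        destruct (Hrow _ b Hb) as [j [Hj Hbj]]. rewrite Hinv2 in Hj.
        destruct (IHd j Hj) as [x [Hp [Hx0 Hxn]]].
        exists (fun i => match i with 0%nat => b | S j => x j end). split; [|split]; auto.
        apply path_cons; [auto|rewrite Hx0; auto|]. rewrite Hinv2. auto. }
    intros n b Hn Hb. replace n with (S m + (n - S m))%nat in * by lia.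
    destruct (aux _ b Hb) as [x [Hp [Hx0 Hxn]]]. rewrite <- Hx0, <- Hxn. apply path_Wab; auto; lia.
Qed.

End Main.

Theorem lemma3p2 (Omega : Type) (PS : probability_space Omega)
  (theta thinv : Omega -> Omega) (ell : Omega -> option nat)
  (alpha : Omega -> nat -> nat -> bool)
  (Hth : invertible_mpt_ergodic PS theta thinv)
  (Hdata : random_shift_data PS theta ell alpha)
  (Hbip : bip_property PS theta thinv ell alpha) :
  forall a : nat, in_W1 PS ell a ->
  exists Null : Omega -> Prop, meas PS Null /\ P PS Null = 0 /\
  forall w, Omega_sym ell a w -> ~ Null w ->
  exists al be : nat,
    (forall n b, (al <= n)%nat -> lt_len b (ell (Nat.iter n theta w)) ->
       Wab_nonempty theta ell alpha n w a b) /\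
    (forall n b, (be <= n)%nat -> lt_len b (ell (Nat.iter n thinv w)) ->
       Wab_nonempty theta ell alpha n (Nat.iter n thinv w) b a).
Proof.
  eapply main_aux; eauto.
Qed.
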